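(* Let $A$ be a simple type and let $\theta = (\theta_Q)_Q$ be a family with $\theta_Q \in D_Q(A)$ for every finite set $Q$. Then the following are equivalent: (i) $\theta$ is a profinite $\lambda$-term, i.e. for every partial surjection $f \colon Q \twoheadrightarrow Q'$ between finite sets, $(\theta_Q, \theta_{Q'}) \in [\![A]\!]_f$; (ii) $\theta$ is a parametric family, i.e. for all finite sets $Q, Q'$ and every relation $R \subseteq Q \times Q'$, $(\theta_Q, \theta_{Q'}) \in [\![A]\!]_R$.
   Context: Simple types are generated from a base type $o$ by $\Rightarrow$. $\Lambda(A)$ is the set of closed simply typed $\lambda$-terms of type $A$ modulo $\beta\eta$. For a finite set $Q$: $[\![o]\!]_Q = Q$, $[\![A\Rightarrow B]\!]_Q$ = all functions $[\![A]\!]_Q \to [\![B]\!]_Q$, and $[\![M]\!]_Q \in [\![A]\!]_Q$ is the standard interpretation of $M \in \Lambda(A)$. The set of definable elements is $D_Q(A) = \{[\![M]\!]_Q : M \in \Lambda(A)\}$. For relations $S \subseteq P \times P'$, $R \subseteq Q \times Q'$, define $S \Rightarrow R \subseteq (P \to Q) \times (P' \to Q')$ as $\{(g,h) : \forall x\,S\,y,\ g(x)\,R\,h(y)\}$. For $R \subseteq Q \times Q'$ the logical relation $[\![A]\!]_R \subseteq [\![A]\!]_Q \times [\![A]\!]_{Q'}$ is defined by $[\![o]\!]_R = R$ and $[\![A \Rightarrow B]\!]_R = [\![A]\!]_R \Rightarrow [\![B]\!]_R$. A partial surjection $f \colon Q \twoheadrightarrow Q'$ is a relation that is the graph of a partial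 function surjective onto $Q'$. *)

(* Defs.v *)
From mathcomp Require Import all_boot.
Set Implicit Arguments.
Unset Strict Implicit.
Unset Printing Implicit Defensive.

Inductive ty : Type := o : ty | arr : ty -> ty -> ty.

Fixpoint sem (Q : Type) (A : ty) : Type :=
  match A with
  | o => Q
  | arr A B => sem Q A -> sem Q B
  end.

Inductive var : list ty -> ty -> Type :=
| VZ (G : list ty) (A : ty) : var (A :: G) A
| VS (G : list ty) (A B : ty) : var G A -> var (B :: G) A.

Inductive term : list ty -> ty -> Type :=
| TVar (G : list ty) (A : ty) : var G A -> term G A
| TLam (G : list ty) (A B : ty) : term (A :: G) B -> term G (arr A B)
| TApp (G : list ty) (A B : ty) : term G (arr A B) -> term G A -> term G B.

Fixpoint env (Q : Type) (G : list ty) : Type :=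
  match G with
  | nil => unit
  | A :: G => (sem Q A * env Q G)%type
  end.

Fixpoint lookup (Q : Type) (G : list ty) (A : ty) (v : var G A) : env Q G -> sem Q A :=
  match v in var G A return env Q G -> sem Q A with
  | VZ _ _ => fun e => e.1
  | VS _ _ _ v => fun e => lookup v e.2
  end.

Fixpoint eval (Q : Type) (G : list ty) (A : ty) (M : term G A) : env Q G -> sem Q A :=
  match M in term G A return env Q G -> sem Q A with
  | TVar _ _ v => fun e => lookup v e
  | TLam _ _ _ M => fun e x => eval M (x, e)
  | TApp _ _ _ M N => fun e => (eval M e) (eval N e)
  end.

Definition interp (Q : Type) (A : ty) (M : term nil A) : sem Q A := eval M tt.

Definition definable (Q : Type) (A : ty) (x : sem Q A) : Prop :=
  exists M : term nil A, interp Q M = x.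

Fixpoint logrel (Q Q' : Type) (R : Q -> Q' -> Prop) (A : ty) {struct A} :
    sem Q A -> sem Q' A -> Prop :=
  match A return sem Q A -> sem Q' A -> Prop with
  | o => R
  | arr A1 B1 => fun g h =>
      forall (x : sem Q A1) (y : sem Q' A1),
        @logrel Q Q' R A1 x y -> @logrel Q Q' R B1 (g x) (h y)
  end.
Arguments logrel {Q Q'} R A _ _.

Definition partial_surjection (Q Q' : Type) (f : Q -> Q' -> Prop) : Prop :=
  (forall x y y', f x y -> f x y' -> y = y') /\ (forall y, exists x, f x y).

Definition profinite (A : ty) (theta : forall Q : finType, sem Q A) : Prop :=
  forall (Q Q' : finType) (f : Q -> Q' -> Prop),
    partial_surjection f -> logrel f A (theta Q) (theta Q').

Definition parametric (A : ty) (theta : forall Q : finType, sem Q A) : Prop :=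
  forall (Q Q' : finType) (R : Q -> Q' -> Prop), logrel R A (theta Q) (theta Q').

(* Main.v *)
Require Import Defs.
From mathcomp Require Import all_boot.
From Stdlib Require Import Classical ClassicalEpsilon FunctionalExtensionality.

Fixpoint envrel {Q Q' : Type} (R : Q -> Q' -> Prop) (G : list ty) :
  env Q G -> env Q' G -> Prop :=
  match G return env Q G -> env Q' G -> Prop with
  | nil => fun _ _ => True
  | A :: G => fun e e' => logrel R A e.1 e'.1 /\ @envrel Q Q' R G e.2 e'.2
  end.

Lemma lookup_rel (Q Q' : Type) (R : Q -> Q' -> Prop) G A (v : var G A) :
  forall e e', envrel R G e e' -> logrel R A (lookup v e) (lookup v e').
Proof. induction v; simpl; intros e e' [H1 H2]; auto. Qed.

Lemma eval_rel (Q Q' : Type) (R : Q -> Q' -> Prop) G A (M : term G A) :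
  forall e e', envrel R G e e' -> logrel R A (eval M e) (eval M e').
Proof.
  induction M; simpl; intros e e' H.
  - apply lookup_rel; exact H.
  - intros x y Hxy; apply IHM; simpl; split; assumption.
  - apply IHM1; [exact H | apply IHM2; exact H].
Qed.

Fixpoint inhab {P : Type} (p0 : P) (B : ty) : sem P B :=
  match B return sem P B with
  | o => p0
  | arr _ B => fun _ => @inhab P p0 B
  end.

Lemma ps_ty (P Q : Type) (p0 : P) (f : P -> Q -> Prop) :
  partial_surjection f -> forall A,
  (forall x y y', logrel f A x y -> logrel f A x y' -> y = y') /\
  (forall y, exists x, logrel f A x y).
Proof.
  intros [Hf Hs] A; induction A as [|A [fA sA] B [fB sB]]; simpl.
  - split; assumption.
  - split.
    + intros g h h' H1 H2; apply functional_extensionality; intro y.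
      destruct (sA y) as [x Hx]. apply (fB (g x)); auto.
    + intro h.
      assert (Hex : forall x : sem P A, exists b : sem P B,
                 forall y, logrel f A x y -> logrel f B b (h y)).
      { intro x. destruct (classic (exists y, logrel f A x y)) as [[y0 Hy0]|Hn].
        - destruct (sB (h y0)) as [b Hb]. exists b. intros y Hy.
          rewrite (fA x y y0 Hy Hy0). exact Hb.
        - exists (inhab p0 B). intros y Hy. exfalso; apply Hn; exists y; exact Hy. }
      exists (fun x => proj1_sig (constructive_indefinite_description _ (Hex x))).
      intros x y Hxy.
      exact (proj2_sig (constructive_indefinite_description _ (Hex x)) y Hxy).
Qed.

Theorem theoremB (A : ty) (theta : forall Q : finType, sem Q A) :
  (forall Q : finType, definable (theta Q)) ->
  (profinite theta <-> parametric theta).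
Proof.
  intros Hdef; split.
  - intros Hpro Q Q' R.
    pose P := (option (Q + Q')%type : finType).
    destruct (Hdef P) as [M HM].
    pose f1 := (fun (p : P) (q : Q) => p = Some (inl q)).
    pose f2 := (fun (p : P) (q : Q') => p = Some (inr q)).
    assert (ps1 : partial_surjection f1).
    { split; unfold f1.
      - intros x y y' -> H; injection H; auto.
      - intro y; exists (Some (inl y)); reflexivity. }
    assert (ps2 : partial_surjection f2).
    { split; unfold f2.
      - intros x y y' -> H; injection H; auto.
      - intro y; exists (Some (inr y)); reflexivity. }
    assert (E1 : theta Q = interp Q M).
    { destruct (@ps_ty P Q None f1 ps1 A) as [fA _].
      apply (fA (theta P)). apply Hpro; exact ps1.
      rewrite <- HM. apply eval_rel; exact I. }
    assert (E2 : theta Q' = interp Q' M).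
    { destruct (@ps_ty P Q' None f2 ps2 A) as [fA _].
      apply (fA (theta P)). apply Hpro; exact ps2.
      rewrite <- HM. apply eval_rel; exact I. }
    rewrite E1 E2. apply eval_rel; exact I.
  - intros H Q Q' f _; apply H.
Qed.
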